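(* Let $\mathbb{F}$ be a field and $n\ge1$. Every maximal (with respect to inclusion) nilpotent subsemigroup $T$ of $M(n,\mathbb{F})$ is a subalgebra of $M(n,\mathbb{F})$, i.e. $T$ is closed under addition and multiplication by scalars (in addition to matrix multiplication).
   Context: $M(n,\mathbb{F})$ denotes the semigroup of all $n\times n$ matrices over $\mathbb{F}$ under matrix multiplication. A semigroup $S$ with zero $0$ is nilpotent of nilpotency degree $k$ if $a_1a_2\cdots a_k=0$ for all $a_1,\dots,a_k\in S$ and there exist $b_1,\dots,b_{k-1}\in S$ with $b_1\cdots b_{k-1}\neq 0$; a nilpotent subsemigroup of $M(n,\mathbb{F})$ is one that is nilpotent with the zero matrix as its zero. Maximality here is among all nilpotent subsemigroups of $M(n,\mathbb{F})$ (of any nilpotency degree). *)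

(* Defs.v *)
From HB Require Import structures.
From mathcomp Require Import all_boot all_order all_algebra.
Set Implicit Arguments. Unset Strict Implicit. Unset Printing Implicit Defensive.
Import GRing.Theory.
Local Open Scope ring_scope.

Definition subsemigroup (F : fieldType) (n : nat) (T : 'M[F]_n -> Prop) : Prop :=
  forall A B, T A -> T B -> T (A *m B).

Definition mxprod (F : fieldType) (n : nat) (s : seq 'M[F]_n) : 'M[F]_n :=
  foldr (fun A B => A *m B) 1%:M s.

(* T is a nilpotent subsemigroup of M(n,F) with the zero matrix as its zero:
   T is a subsemigroup, contains the zero matrix, and for some k >= 1 every
   product of k elements of T is the zero matrix. *)
Definition nilpotent_subsemigroup (F : fieldType) (n : nat)
    (T : 'M[F]_n -> Prop) : Prop :=
  [/\ subsemigroup T, T 0 &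
      exists k : nat, forall s : seq 'M[F]_n,
        size s = k.+1 -> (forall A, A \in s -> T A) -> mxprod s = 0].

Definition maximal_nilpotent_subsemigroup (F : fieldType) (n : nat)
    (T : 'M[F]_n -> Prop) : Prop :=
  nilpotent_subsemigroup T /\
  forall S : 'M[F]_n -> Prop, nilpotent_subsemigroup S ->
    (forall A, T A -> S A) -> forall A, S A -> T A.

(* Main.v *)
Require Import Defs.
From HB Require Import structures.
From mathcomp Require Import all_boot all_order all_algebra.
Import GRing.Theory.
Local Open Scope ring_scope.

Inductive Sp (F : fieldType) (n : nat) (T : 'M[F]_n -> Prop) : 'M[F]_n -> Prop :=
| Sp_base A : T A -> Sp F n T A
| Sp_add A B : Sp F n T A -> Sp F n T B -> Sp F n T (A + B)
| Sp_scale (a : F) A : Sp F n T A -> Sp F n T (a *: A).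
Arguments Sp {F n} T _.

Lemma mxprod_cat (F : fieldType) (n : nat) (s t : seq 'M[F]_n) :
  mxprod (s ++ t) = mxprod s *m mxprod t.
Proof.
elim: s => [|x s IH] /=; first by rewrite mul1mx.
by rewrite /mxprod /= -/(mxprod _) -/(mxprod _) IH mulmxA.
Qed.

Lemma mxprod_cons (F : fieldType) (n : nat) (x : 'M[F]_n) t :
  mxprod (x :: t) = x *m mxprod t.
Proof. by []. Qed.

Lemma Sp_mul (F : fieldType) (n : nat) (T : 'M[F]_n -> Prop) :
  subsemigroup T -> forall A B, Sp T A -> Sp T B -> Sp T (A *m B).
Proof.
move=> hT A B hA; elim: hA B => [A0 TA0|A1 A2 _ IH1 _ IH2|a A0 _ IH] B hB.
- elim: hB => [B0 TB0|B1 B2 _ IH1 _ IH2|b B0 _ IH].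
  + by apply: Sp_base; apply: hT.
  + by rewrite mulmxDr; apply: Sp_add.
  + by rewrite -scalemxAr; apply: Sp_scale.
- by rewrite mulmxDl; apply: Sp_add; [apply: IH1|apply: IH2].
- by rewrite -scalemxAl; apply: Sp_scale; apply: IH.
Qed.

Lemma Sp_nil (F : fieldType) (n : nat) (T : 'M[F]_n -> Prop) (k : nat) :
  (forall s : seq 'M[F]_n, size s = k.+1 -> (forall A, A \in s -> T A) -> mxprod s = 0) ->
  forall s t : seq 'M[F]_n, (size s + size t = k.+1)%N ->
    (forall A, A \in s -> Sp T A) -> (forall A, A \in t -> T A) ->
    mxprod (s ++ t) = 0.
Proof.
move=> hk s; elim/last_ind: s => [|s x IH] t hsz hs ht.
  by apply: hk => //.
have hx : Sp T x by apply: hs; rewrite mem_rcons mem_head.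
have hs' : forall A, A \in s -> Sp T A.
  by move=> A hA; apply: hs; rewrite mem_rcons in_cons hA orbT.
rewrite cat_rcons mxprod_cat mxprod_cons.
elim: hx => [A TA|A B _ IHA _ IHB|a A _ IHA].
- rewrite -mxprod_cons -mxprod_cat; apply: IH => //.
  + by rewrite size_rcons in hsz; rewrite /= addnS -hsz addSn.
  + by move=> B; rewrite in_cons => /orP [/eqP ->|]; [|apply: ht].
- by rewrite mulmxDl mulmxDr IHA IHB addr0.
- by rewrite -scalemxAl -scalemxAr IHA scaler0.
Qed.

Theorem lemma3 (F : fieldType) (n : nat) (hn : (0 < n)%N)
    (T : 'M[F]_n -> Prop) :
  maximal_nilpotent_subsemigroup T ->
  (forall A B, T A -> T B -> T (A + B)) /\
  (forall (a : F) A, T A -> T (a *: A)).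
Proof.
move=> [[hsg hT0 [k hk]] hmax].
have hS : nilpotent_subsemigroup (Sp T).
  split.
  - by move=> A B; apply: Sp_mul.
  - by apply: Sp_base.
  - exists k => s hs hin; rewrite -(cats0 s).
    apply: (@Sp_nil F n T k hk s [::]) => //; by rewrite addn0.
have sub : forall A, Sp T A -> T A.
  by apply: hmax hS _ => A; apply: Sp_base.
split.
- by move=> A B hA hB; apply: sub; apply: Sp_add; apply: Sp_base.
- by move=> a A hA; apply: sub; apply: Sp_scale; apply: Sp_base.
Qed.
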